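(* Let $A$ be a set of regular cardinals with no maximum such that $\sup(A)$ is a strong limit cardinal (regular or singular). Then $\operatorname{spec}(A)\setminus\sup(A)\subseteq\operatorname{spec}^*(A)$.
   Context: $\prod A$ is the set of functions $f$ on $A$ with $f(a)\in a$, ordered pointwise. $\operatorname{spec}(A)$ is the set of regular $\lambda$ for which some $\mathcal{F}\subseteq\prod A$ of size $\lambda$ has every $\lambda$-sized subset unbounded in $(\prod A,<)$. For $\mathcal{G}\subseteq\prod A$, $\operatorname{ub}(\mathcal{G})$ is the set of $a\in A$ such that $\{f(a):f\in\mathcal{G}\}$ is unbounded in $a$. $\operatorname{spec}^*(A)$ (the strong part of the Tukey spectrum) is the set of regular $\lambda$ such that there is $\mathcal{F}\subseteq\prod A$ of size $\lambda$ such that for every $\mathcal{F}_0\subseteq\mathcal{F}$ of size $\lambda$, $\operatorname{ub}(\mathcal{F}_0)$ is unbounded in $\sup(A)$. $\operatorname{spec}(A)\setminus\sup(A)$ denotes the members of $\operatorname{spec}(A)$ that are $\geq\sup(A)$. *)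

(* Defs.v *)
From mathcomp Require Import all_boot.
From mathcomp Require Import boolp classical_sets functions cardinality.
Unset Printing Implicit Defensive.
Local Open Scope classical_set_scope.
Local Open Scope card_scope.

(* Ordinals are modelled as elements of a (strictly) well-ordered type;
   the ordinal represented by [a] is its initial segment [seg lt a]. *)
Definition well_order {T : Type} (lt : T -> T -> Prop) : Prop :=
  (forall x, ~ lt x x) /\
  (forall x y z, lt x y -> lt y z -> lt x z) /\
  (forall x y, lt x y \/ x = y \/ lt y x) /\
  well_founded lt.

Definition leo {T : Type} (lt : T -> T -> Prop) (x y : T) : Prop := lt x y \/ x = y.

Definition seg {T : Type} (lt : T -> T -> Prop) (a : T) : set T := [set x | lt x a].

Definition card_lt {T U : Type} (X : set T) (Y : set U) : Prop :=
  X #<= Y /\ ~ (Y #<= X).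

(* [D] (a downward-closed part of a well order, i.e. an ordinal) is a regular
   cardinal: infinite, initial (every proper initial segment is of strictly
   smaller cardinality), and every cofinal subset has full cardinality
   (cf = identity). *)
Definition regular_ord {T : Type} (lt : T -> T -> Prop) (D : set T) : Prop :=
  infinite_set D /\
  (forall x, D x -> card_lt (seg lt x) D) /\
  (forall X : set T, X `<=` D ->
     (forall y, D y -> exists x, X x /\ leo lt y x) -> X #= D).

(* sup(A), as the set of ordinals below it *)
Definition supA {T : Type} (lt : T -> T -> Prop) (A : set T) : set T :=
  \bigcup_(a in A) seg lt a.

Definition strong_limit {T : Type} (S : set T) : Prop :=
  forall Y : set T, Y `<=` S -> card_lt Y S ->
    card_lt [set Z : set T | Z `<=` Y] S.

Definition ProdA {T : Type} (lt : T -> T -> Prop) (A : set T) :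
  set ({a : T | A a} -> T) := [set f | forall a, lt (f a) (proj1_sig a)].

Definition lt_prod {T : Type} (lt : T -> T -> Prop) (A : set T)
  (f g : {a : T | A a} -> T) : Prop := forall a, lt (f a) (g a).

Definition unbounded_prod {T : Type} (lt : T -> T -> Prop) (A : set T)
  (G : set ({a : T | A a} -> T)) : Prop :=
  ~ exists g, ProdA lt A g /\ forall f, G f -> @lt_prod T lt A f g.

Definition ub {T : Type} (lt : T -> T -> Prop) (A : set T)
  (G : set ({a : T | A a} -> T)) : set T :=
  [set a | exists h : A a, forall x, lt x a ->
             exists f, G f /\ leo lt x (f (exist _ a h))].

(* lambda (given as a well-ordered type L) is in spec(A) *)
Definition in_spec {T L : Type} (lt : T -> T -> Prop) (A : set T)
  (ltL : L -> L -> Prop) : Prop :=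
  regular_ord ltL [set: L] /\
  exists F, F `<=` ProdA lt A /\ F #= [set: L] /\
    forall F0, F0 `<=` F -> F0 #= [set: L] -> @unbounded_prod T lt A F0.

Definition in_spec_star {T L : Type} (lt : T -> T -> Prop) (A : set T)
  (ltL : L -> L -> Prop) : Prop :=
  regular_ord ltL [set: L] /\
  exists F, F `<=` ProdA lt A /\ F #= [set: L] /\
    forall F0, F0 `<=` F -> F0 #= [set: L] ->
      forall x, supA lt A x -> exists a, @ub T lt A F0 a /\ leo lt x a.

(* Main.v *)
Require Import Defs.
From mathcomp Require Import all_boot.
From mathcomp Require Import boolp classical_sets functions cardinality.
Local Open Scope classical_set_scope.
Local Open Scope card_scope.

Lemma card_le_fun {T U} (X : set T) (Y : set U) (u0 : U) :
  X #<= Y -> exists f : T -> U, (forall x, X x -> Y (f x)) /\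
    (forall x1 x2, X x1 -> X x2 -> f x1 = f x2 -> x1 = x2).
Proof.
move=> /card_leP[f].
pose F x := match pselect (X x) with left h => val (f (SigSub (mem_set h))) | right _ => u0 end.
exists F; split.
  move=> x Xx; rewrite /F; case: pselect => // h.
  exact: set_mem (valP (f _)).
move=> x1 x2 X1 X2; rewrite /F; case: pselect => // h1; case: pselect => // h2.
move=> /val_inj /(@inj _ _ _ f) .
move=> H; have := H (in_setT _) (in_setT _).
by case.
Qed.

Lemma bounded_or {L} (ltL : L -> L -> Prop) : well_order ltL ->
  regular_ord ltL [set: L] -> forall X : set L,
  X #= [set: L] \/ exists y, forall x, X x -> ltL x y.
Proof.
move=> [irr [tr [tri wf]]] [_ [_ cof]] X.
case: (pselect (forall y, exists x, X x /\ leo ltL y x)) => H.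
  by left; apply: cof.
right; move/existsNP: H => [y Hy]; exists y => x Xx.
have [//|[E|lt]] := tri x y.
  by exfalso; apply: Hy; exists x; split=> //; right.
by exfalso; apply: Hy; exists x; split=> //; left.
Qed.

Lemma pigeon {L U Ix : Type} (ltL : L -> L -> Prop) : well_order ltL ->
  regular_ord ltL [set: L] -> forall (F0 : set U) (c : U -> Ix) (Iset : set Ix) (u0 : U),
  [set: L] #<= F0 -> (forall f, F0 f -> Iset (c f)) -> ~ ([set: L] #<= Iset) ->
  exists i, [set: L] #<= [set f | F0 f /\ c f = i].
Proof.
move=> WO reg F0 c Iset u0 LF0 cI notLI.
have [phi [phiF phiI]] := card_le_fun _ _ u0 LF0.
case: (pselect (exists i, [set: L] #<= [set f | F0 f /\ c f = i])) => // Hno.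
exfalso.
have Hb : forall i, exists y, forall l, c (phi l) = i -> ltL l y.
  move=> i; have [H|//] := bounded_or ltL WO reg [set l | c (phi l) = i].
  exfalso; apply: Hno; exists i.
  move/card_eqPle: H => [_ H].
  apply: (card_le_trans H).
  have E : phi @` [set l | c (phi l) = i] #= [set l | c (phi l) = i].
    by apply: inj_card_eq => a b _ _; apply: phiI.
  apply: (card_le_trans (proj2 ((card_eqPle _ _).1 E))).
  apply: subset_card_le => _ [l Hl <-]; split=> //; exact: phiF.
have [b Hb'] := choice Hb.
pose J := (fun l => c (phi l)) @` [set: L].
have [H|[y Hy]] := bounded_or ltL WO reg (b @` J).
  apply: notLI; move/card_eqPle: H => [_ H].
  apply: (card_le_trans H); apply: (card_le_trans (card_image_le _ _)).
  by apply: subset_card_le => _ [l _ <-]; apply: cI; apply: phiF.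
have h1 := Hb' (c (phi y)) y erefl.
have h2 := Hy (b (c (phi y))) (ex_intro2 _ _ (c (phi y)) (ex_intro2 _ _ y I erefl) erefl).
case: WO => irr [tr _]; exact: irr _ (tr _ _ _ h1 h2).
Qed.

Lemma succ_ex {T} (lt : T -> T -> Prop) (a w : T) : well_order lt ->
  regular_ord lt (seg lt a) -> lt w a -> exists z, lt w z /\ lt z a.
Proof.
move=> [irr [tr [tri _]]] [inf [_ cof]] wa.
case: (pselect (exists z, lt w z /\ lt z a)) => // Hn; exfalso.
have H : [set w] #= seg lt a.
  apply: cof; first by move=> y ->.
  move=> y ya; exists w; split => //.
  have [//|[E|wy]] := tri y w; [by left|by right|].
  by exfalso; apply: Hn; exists y.
by apply: inf; rewrite -(eq_finite_set H); exact: finite_set1.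
Qed.

Lemma pair_eq {T} (lt : T -> T -> Prop) (a b a' b' : T) : well_order lt ->
  lt b a -> lt b' a' -> [set a; b] = [set a'; b'] -> a = a' /\ b = b'.
Proof.
move=> [irr [tr _]] ba ba' E.
have aa' : a = a'.
  have : [set a'; b'] a by rewrite -E; left.
  have : [set a; b] a' by rewrite E; left.
  case=> [->//|E1]; case=> [->//|E2].
  by exfalso; apply: (irr a); apply: (tr a a' a); [rewrite {1}E2 | rewrite E1].
subst a'; split=> //.
have : [set a; b'] b by rewrite -E; right.
case=> // E1; by exfalso; apply: (irr a); rewrite -{1}E1.
Qed.
Theorem lemma5p3 (T : Type) (lt : T -> T -> Prop) (A : set T) :
  well_order lt ->
  (forall a, A a -> regular_ord lt (seg lt a)) ->
  (forall a, A a -> exists b, A b /\ lt a b) ->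
  strong_limit (supA lt A) ->
  forall (L : Type) (ltL : L -> L -> Prop), well_order ltL ->
    in_spec lt A ltL ->
    supA lt A #<= [set: L] ->
    in_spec_star lt A ltL.
Proof.
move=> WO regA nomax SL L ltL WOL [regL [F [FP [FL Fspec]]]] supL.
split=> //; exists F; split=> //; split=> // F0 F0F F0L x Sx.
case: (pselect (exists a, ub lt A F0 a /\ leo lt x a)) => // Hno; exfalso.
have [irr [tr [tri _]]] := WO.
have Hnub : forall a, ub lt A F0 a -> lt a x.
  move=> a ua; have [//|[E|xa]] := tri a x.
    by exfalso; apply: Hno; exists a; split=> //; right.
  by exfalso; apply: Hno; exists a; split=> //; left.
case: Sx => a1 Aa1 xa1.
have [a2 [Aa2 a12]] := nomax a1 Aa1.
have ltS : card_lt (seg lt a1) (supA lt A).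
  split; first by apply: subset_card_le => y ya1; exists a1.
  move=> H; have [_ nle] := (regA a2 Aa2).2.1 a1 a12; apply: nle.
  apply: (card_le_trans _ H); apply: subset_card_le => y ya2; exists a2 => //.
have [PleS PnotS] := SL _ (fun y ya1 => ex_intro2 _ _ a1 Aa1 ya1) ltS.
have [e1 [e1S e1inj]] := card_le_fun _ _ x PleS.
pose Y1 := e1 @` [set Z | Z `<=` seg lt a1].
have Y1S : Y1 `<=` supA lt A by move=> _ [Z HZ <-]; apply: e1S.
have Y1lt : card_lt Y1 (supA lt A).
  split; first exact: subset_card_le.
  by move=> H; apply: PnotS; apply: (card_le_trans H (card_image_le _ _)).
have [_ InotS] := SL _ Y1S Y1lt.
pose c (f : {a : T | A a} -> T) :=
  (fun d : {a : T | A a} => e1 [set proj1_sig d; f d]) @` [set d : {a : T | A a} | lt (proj1_sig d) x].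
have inP : forall (f : {a : T | A a} -> T) d, F f -> lt (proj1_sig d) x ->
    [set proj1_sig d; f d] `<=` seg lt a1.
  move=> f d Ff dx y [->|->]; rewrite /seg /=.
    exact: tr _ _ _ dx xa1.
  exact: tr _ _ _ (FP _ Ff d) (tr _ _ _ dx xa1).
have cI : forall f, F0 f -> [set Z | Z `<=` Y1] (c f).
  move=> f F0f _ [d dx <-]; exists [set proj1_sig d; f d] => //.
  exact: inP (F0F _ F0f) dx.
have notLI : ~ ([set: L] #<= [set Z | Z `<=` Y1]).
  by move=> H; apply: InotS; apply: (card_le_trans supL H).
have LF0 : [set: L] #<= F0 by have [] := (card_eqPle _ _).1 F0L.
have [i Hi] := pigeon ltL WOL regL F0 c _ (fun _ => x) LF0 cI notLI.
pose F1 := [set f | F0 f /\ c f = i].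
have F1F0 : F1 `<=` F0 by move=> f [].
have F1L : F1 #= [set: L].
  apply: Cantor_Bernstein => //.
  apply: (card_le_trans (subset_card_le F1F0)).
  by have [] := (card_eqPle _ _).1 F0L.
have unb := Fspec F1 (fun f h => F0F f (F1F0 f h)) F1L.
have [l0 _] := infinite_setN0 regL.1.
have [phi [phiF _]] := card_le_fun _ _ (fun _ => x) Hi.
have [F0f0 cf0] := phiF l0 I.
set f0 := phi l0 in F0f0 cf0.
have key : forall f d, F1 f -> lt (proj1_sig d) x -> f d = f0 d.
  move=> f d [F0f cf] dx.
  have : c f (e1 [set proj1_sig d; f d]) by exists d.
  rewrite cf -cf0; case=> d' d'x E.
  have E' := e1inj _ _ (inP _ _ (F0F _ F0f0) d'x) (inP _ _ (F0F _ F0f) dx) E.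
  have [E1 E2] := pair_eq lt _ _ _ _ WO (FP _ (F0F _ F0f0) d') (FP _ (F0F _ F0f) d) E'.
  have dd : d' = d.
    move: E1 E2; case: d' {d'x E E'} => a' h'; case: d {dx} => a h /= E1.
    subst a'; rewrite (Prop_irrelevance h' h) => //.
  by rewrite -E2 dd.
have Q : forall d : {a : T | A a}, exists z, lt z (proj1_sig d) /\ forall f, F1 f -> lt (f d) z.
  move=> d; case: (pselect (lt (proj1_sig d) x)) => dx.
    have [z [z1 z2]] := succ_ex _ _ _ WO (regA _ (proj2_sig d)) (FP _ (F0F _ F0f0) d).
    by exists z; split=> // f F1f; rewrite (key f d F1f dx).
  have nub : ~ ub lt A F0 (proj1_sig d) by move=> u; apply: dx; apply: Hnub.
  case: (pselect (exists z, lt z (proj1_sig d) /\ forall f, F1 f -> lt (f d) z)) => // H.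
  exfalso; apply: nub; case: d dx H => a h /= dx H; exists h => y ya.
  case: (pselect (exists f, F0 f /\ leo lt y (f (exist _ a h)))) => // nf.
  exfalso; apply: H; exists y; split=> // f F1f.
  have [//|[E|yf]] := tri (f (exist _ a h)) y.
    by exfalso; apply: nf; exists f; split; [exact: F1F0|right].
  by exfalso; apply: nf; exists f; split; [exact: F1F0|left].
have [g Hg] := choice Q.
apply: unb; exists g; split.
  by move=> d; exact: (Hg d).1.
by move=> f F1f d; exact: ((Hg d).2 f F1f).
Qed.
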